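(* Consider three qubits $A,B,C$, each with Hilbert space $\mathbb{C}^2$ and computational basis $\{|0\rangle,|1\rangle\}$. Define the unit vectors \[ |\psi_{AB}\rangle=\tfrac{1}{\sqrt{217}}\big(6|01\rangle-9|10\rangle-10|11\rangle\big)\in\mathbb{C}^2_A\otimes\mathbb{C}^2_B, \] \[ |\psi_{AC}\rangle=\tfrac{1}{\sqrt{46}}\big(-2|00\rangle-4|01\rangle-|10\rangle+5|11\rangle\big)\in\mathbb{C}^2_A\otimes\mathbb{C}^2_C, \] \[ |\psi_{BC}\rangle=\tfrac{1}{\sqrt{53}}\big(-6|00\rangle-|01\rangle-4|10\rangle\big)\in\mathbb{C}^2_B\otimes\mathbb{C}^2_C, \] and the operators on $\mathbb{C}^2_A\otimes\mathbb{C}^2_B\otimes\mathbb{C}^2_C$ \[ H=\tfrac16\Big(|\psi_{AB}\rangle\langle\psi_{AB}|\otimes I_C+|\psi_{AC}\rangle\langle\psi_{AC}|\otimes I_B+I_A\otimes|\psi_{BC}\rangle\langle\psi_{BC}|\Big), \] \[ H_{\mathrm{target}}=\tfrac16\Big(|0\rangle\langle0|_A\otimes|0\rangle\langle0|_B\otimes I_C+|0\rangle\langle0|_A\otimes I_B\otimes|0\rangle\langle0|_C+I_A\otimes|0\rangle\langle0|_B\otimes|0\rangle\langle0|_C\Big). \] Then the sum of the three largest eigenvalues of $H$ strictly exceeds $5/6$, which is the sum of the three largest eigenvalues of $H_{\mathrm{target}}$. Consequently $H\preceq H_{\mathrm{target}}$ fails; i.e., with $Q=I/2$ on $\mathbb{C}^2$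 (for which $|0\rangle$ is a maximal eigenvector), $n=3$, and $\mu$ the uniform probability measure on the 2-element subsets of $\{A,B,C\}$, there exist pure states $(|\psi_I\rangle)_I$ such that $\sum_I \mu_I |\psi_I\rangle\langle\psi_I|\otimes Q^{\otimes I^c}\not\preceq \sum_I\mu_I |q_1\rangle\langle q_1|^{\otimes I}\otimes Q^{\otimes I^c}$ (with $|q_1\rangle=|0\rangle$).
   Context: Operators such as $|\psi_{AC}\rangle\langle\psi_{AC}|\otimes I_B$ denote the operator acting as $|\psi_{AC}\rangle\langle\psi_{AC}|$ on qubits $A,C$ and as the identity on qubit $B$ (embedded in the ordering $A\otimes B\otimes C$); similarly for the other terms. For Hermitian matrices $X,Y$ of the same size, $X\preceq Y$ (majorization) means that, with eigenvalues listed in nonincreasing order, $\sum_{i=1}^k\lambda_i(X)\le\sum_{i=1}^k\lambda_i(Y)$ for every $k$, with equality when $k$ equals the dimension (equal traces). For $I\subseteq\{A,B,C\}$, $I^c$ is its complement and $Q^{\otimes I^c}$ is $Q$ tensored on the qubits in $I^c$. *)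

(* Defs.v *)
From HB Require Import structures.
From mathcomp Require Import all_boot all_order all_algebra all_field.
Set Implicit Arguments. Unset Strict Implicit. Unset Printing Implicit Defensive.
Import Order.TTheory GRing.Theory Num.Theory.
Local Open Scope ring_scope.
Local Open Scope sesquilinear_scope.

Definition eigen_desc n (A : 'M[algC]_n) (l : seq algC) : Prop :=
  [/\ size l = n, all (fun x => x \is Num.real) l,
      sorted (fun x y => y <= x) l
    & char_poly A = \prod_(x <- l) ('X - x%:P)].

Definition topsum (l : seq algC) (k : nat) : algC := \sum_(i < k) l`_i.

Definition majorized n (X Y : 'M[algC]_n) : Prop :=
  forall lx ly, eigen_desc X lx -> eigen_desc Y ly ->
    (forall k, (k < n)%N -> topsum lx k <= topsum ly k) /\ topsum lx n = topsum ly n.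

Definition ket2 (a b : nat) : 'cV[algC]_4 := delta_mx (inord (2 * a + b)) 0.
Definition ket0 : 'cV[algC]_2 := delta_mx 0 0.

Definition proj m (v : 'cV[algC]_m) : 'M[algC]_m := v *m v ^t*.

Definition unitvec m (v : 'cV[algC]_m) : Prop := v ^t* *m v = 1%:M.

(* Three qubits A,B,C, ordering A (x) B (x) C: index i = 4a + 2b + c. *)
Definition bitA (i : 'I_8) : nat := i %/ 4.
Definition bitB (i : 'I_8) : nat := (i %/ 2) %% 2.
Definition bitC (i : 'I_8) : nat := i %% 2.

(* M_{AB} (x) Q_C, M_{AC} (x) Q_B, Q_A (x) M_{BC}, with M on two qubits
   (index 2x+y) and Q on one qubit. *)
Definition embAB (M : 'M[algC]_4) (Q : 'M[algC]_2) : 'M[algC]_8 :=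
  \matrix_(i, j) (M (inord (2 * bitA i + bitB i)) (inord (2 * bitA j + bitB j))
                  * Q (inord (bitC i)) (inord (bitC j))).
Definition embAC (M : 'M[algC]_4) (Q : 'M[algC]_2) : 'M[algC]_8 :=
  \matrix_(i, j) (M (inord (2 * bitA i + bitC i)) (inord (2 * bitA j + bitC j))
                  * Q (inord (bitB i)) (inord (bitB j))).
Definition embBC (M : 'M[algC]_4) (Q : 'M[algC]_2) : 'M[algC]_8 :=
  \matrix_(i, j) (M (inord (2 * bitB i + bitC i)) (inord (2 * bitB j + bitC j))
                  * Q (inord (bitA i)) (inord (bitA j))).

Definition psiAB : 'cV[algC]_4 :=
  (sqrtC 217)^-1 *: (6 *: ket2 0 1 - 9 *: ket2 1 0 - 10 *: ket2 1 1).
Definition psiAC : 'cV[algC]_4 :=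
  (sqrtC 46)^-1 *: (- 2 *: ket2 0 0 - 4 *: ket2 0 1 - ket2 1 0 + 5 *: ket2 1 1).
Definition psiBC : 'cV[algC]_4 :=
  (sqrtC 53)^-1 *: (- 6 *: ket2 0 0 - ket2 0 1 - 4 *: ket2 1 0).

Definition Hmat : 'M[algC]_8 :=
  6^-1 *: (embAB (proj psiAB) 1%:M + embAC (proj psiAC) 1%:M + embBC (proj psiBC) 1%:M).

(* |0><0|_A (x) |0><0|_B = |00><00| *)
Definition Htarget : 'M[algC]_8 :=
  6^-1 *: (embAB (proj (ket2 0 0)) 1%:M + embAC (proj (ket2 0 0)) 1%:M
           + embBC (proj (ket2 0 0)) 1%:M).

(* General form: Q = I/2, mu uniform (1/3) on the 2-subsets {A,B},{A,C},{B,C}. *)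
Definition Qhalf : 'M[algC]_2 := 2^-1 *: 1%:M.
Definition mu : algC := 3^-1.

Definition Hgen (pAB pAC pBC : 'cV[algC]_4) : 'M[algC]_8 :=
  mu *: embAB (proj pAB) Qhalf + mu *: embAC (proj pAC) Qhalf
  + mu *: embBC (proj pBC) Qhalf.

Definition ktens (u v : 'cV[algC]_2) : 'cV[algC]_4 :=
  \col_(i < 4) (u (inord (i %/ 2)) 0 * v (inord (i %% 2)) 0).

Definition Hgen_target : 'M[algC]_8 :=
  let P := proj (ktens ket0 ket0) in
  mu *: embAB P Qhalf + mu *: embAC P Qhalf + mu *: embBC P Qhalf.

(* Main.v *)
Require Import Defs.
From mathcomp Require Import all_boot all_order all_algebra all_field.
From mathcomp Require Import ring lra zify.
Import Order.TTheory GRing.Theory Num.Theory Num.Def.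
Local Open Scope ring_scope.
Local Open Scope sesquilinear_scope.

Definition bA (n : nat) : nat := match n with 0|1|2|3 => 0 | _ => 1 end.
Definition bB (n : nat) : nat := match n with 0|1|4|5 => 0 | _ => 1 end.
Definition bC (n : nat) : nat := match n with 0|2|4|6 => 0 | _ => 1 end.
Definition iAB (n : nat) : nat := match n with 0|1 => 0 | 2|3 => 1 | 4|5 => 2 | _ => 3 end.
Definition iAC (n : nat) : nat := match n with 0|2 => 0 | 1|3 => 1 | 4|6 => 2 | _ => 3 end.
Definition iBC (n : nat) : nat := match n with 0|4 => 0 | 1|5 => 1 | 2|6 => 2 | _ => 3 end.

Lemma bitsE (i : 'I_8) : [/\ bitA i = bA i, bitB i = bB i & bitC i = bC i].
Proof. by case: i => [[|[|[|[|[|[|[|[|//]]]]]]]] Hi]. Qed.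
Lemma idxE (i : 'I_8) :
  [/\ (2 * bitA i + bitB i = iAB i)%N, (2 * bitA i + bitC i = iAC i)%N
    & (2 * bitB i + bitC i = iBC i)%N].
Proof. by case: i => [[|[|[|[|[|[|[|[|//]]]]]]]] Hi]. Qed.

Definition wAB (k : nat) : algC := nth 0 [:: 0; 6; -9; -10] k.
Definition wAC (k : nat) : algC := nth 0 [:: -2; -4; -1; 5] k.
Definition wBC (k : nat) : algC := nth 0 [:: -6; -1; -4; 0] k.
Definition dd (a b : nat) : algC := if eqn a b then 1 else 0.

Definition hmf (i j : nat) : algC :=
  6^-1 * (217^-1 * (wAB (iAB i) * wAB (iAB j)) * dd (bC i) (bC j)
        + 46^-1 * (wAC (iAC i) * wAC (iAC j)) * dd (bB i) (bB j)
        + 53^-1 * (wBC (iBC i) * wBC (iBC j)) * dd (bA i) (bA j)).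

Lemma ket2E a b (k : 'I_4) : (2 * a + b < 4)%N -> ket2 a b k 0 = (nat_of_ord k == 2 * a + b)%:R.
Proof. by move=> h; rewrite /ket2 mxE -val_eqE /= inordK // andbT. Qed.

Lemma projZ m c (w : 'cV[algC]_m) x y :
  proj (c *: w) x y = (c * c^*) * (w x 0 * (w y 0)^*).
Proof.
rewrite /proj mxE big_ord1 !mxE rmorphM /=; ring.
Qed.

Lemma sqrt_inv2 (n : nat) : (sqrtC n%:R)^-1 * ((sqrtC n%:R)^-1)^* = (n%:R : algC)^-1.
Proof.
have r : (sqrtC (n%:R : algC))^-1 \is Num.real by rewrite rpredV ger0_real // sqrtC_ge0 ler0n.
by rewrite (conj_Creal r) -invfM -expr2 sqrtCK.
Qed.

Lemma w_real (s : seq algC) k : all (fun z => z \is Num.real) s -> nth 0 s k \is Num.real.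
Proof.
move=> h; have [lt|ge] := ltnP k (size s); first by apply: (allP h); rewrite mem_nth.
by rewrite nth_default.
Qed.

Lemma projAB (x y : 'I_4) : proj psiAB x y = 217^-1 * (wAB x * wAB y).
Proof.
rewrite /psiAB projZ sqrt_inv2.
have e : forall k : 'I_4, (6 *: ket2 0 1 - 9 *: ket2 1 0 - 10 *: ket2 1 1) k 0 = wAB k.
  move=> k; rewrite !mxE.
  case: k => [[|[|[|[|//]]]] Hk]; rewrite -!val_eqE /= !inordK //= /wAB /=; ring.
rewrite !e (conj_Creal (w_real _ _ _)) //=.
by rewrite !(rpredN, rpred_nat, rpred0, rpred1).
Qed.

Lemma projAC (x y : 'I_4) : proj psiAC x y = 46^-1 * (wAC x * wAC y).
Proof.
rewrite /psiAC projZ sqrt_inv2.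
have e : forall k : 'I_4, (- 2 *: ket2 0 0 - 4 *: ket2 0 1 - ket2 1 0 + 5 *: ket2 1 1) k 0 = wAC k.
  move=> k; rewrite !mxE.
  case: k => [[|[|[|[|//]]]] Hk]; rewrite -!val_eqE /= !inordK //= /wAC /=; ring.
rewrite !e (conj_Creal (w_real _ _ _)) //=.
by rewrite !(rpredN, rpred_nat, rpred0, rpred1).
Qed.

Lemma projBC (x y : 'I_4) : proj psiBC x y = 53^-1 * (wBC x * wBC y).
Proof.
rewrite /psiBC projZ sqrt_inv2.
have e : forall k : 'I_4, (- 6 *: ket2 0 0 - ket2 0 1 - 4 *: ket2 1 0) k 0 = wBC k.
  move=> k; rewrite !mxE.
  case: k => [[|[|[|[|//]]]] Hk]; rewrite -!val_eqE /= !inordK //= /wBC /=; ring.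
rewrite !e (conj_Creal (w_real _ _ _)) //=.
by rewrite !(rpredN, rpred_nat, rpred0, rpred1).
Qed.

Lemma ddE a b : (1 *+ (a == b) : algC) = dd a b.
Proof. by rewrite /dd; have -> : eqn a b = (a == b) by []; case: (a == b). Qed.

Lemma idx_lt n : [/\ (iAB n < 4)%N, (iAC n < 4)%N, (iBC n < 4)%N, (bA n < 2)%N & (bB n < 2)%N] /\ (bC n < 2)%N.
Proof. by case: n => [|[|[|[|[|[|[|[|n]]]]]]]]. Qed.

Lemma Hmat_entry (i j : 'I_8) : Hmat i j = hmf i j.
Proof.
have [[eAi eBi eCi] [fABi fACi fBCi]] := (bitsE i, idxE i).
have [[eAj eBj eCj] [fABj fACj fBCj]] := (bitsE j, idxE j).
have [[l1 l2 l3 l4 l5] l6] := idx_lt i.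
have [[m1 m2 m3 m4 m5] m6] := idx_lt j.
rewrite /Hmat; move: (proj psiAB) (projAB) => P1 hP1; move: (proj psiAC) (projAC) => P2 hP2.
move: (proj psiBC) (projBC) => P3 hP3.
rewrite !mxE hP1 hP2 hP3 fABi fACi fBCi fABj fACj fBCj eAi eBi eCi eAj eBj eCj.
rewrite -!val_eqE /= !inordK // !ddE /hmf; ring.
Qed.
Lemma eig_real n (A : 'M[algC]_n) a :
  A ^t conjC = A -> root (char_poly A) a -> a \is Num.real.
Proof.
move=> hA; rewrite -eigenvalue_root_char => /eigenvalueP [v vA vn0].
set X := v *m A *m v ^t conjC.
have h1 : X = a *: (v *m v ^t conjC) by rewrite /X vA scalemxAl.
have h2 : X ^t conjC = X.
  by rewrite /X !trmx_mul !map_mxM trmxCK hA mulmxA.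

have hn : 0 < (v *m v ^t conjC) 0 0 by rewrite -dotmxE dnorm_gt0.
have h3 : (X 0 0)^* = X 0 0 by rewrite -{2}h2 !mxE.
move: h3; rewrite h1 mxE rmorphM /= (conj_Creal (gtr0_real hn)).
move=> /(mulIf (lt0r_neq0 hn)) ha.
by rewrite CrealE ha.
Qed.
Lemma sign_prod (s : seq algC) t : all (fun z => z \is Num.real) s -> t \is Num.real ->
  \prod_(z <- s) (t - z) != 0 ->
  0 < (-1) ^+ (count (fun z => t < z) s) * \prod_(z <- s) (t - z).
Proof.
move=> + tr; elim: s => [|z s IH] /=; first by rewrite big_nil expr0 mul1r ltr01.
move=> /andP [zr sr]; rewrite big_cons mulf_eq0 negb_or => /andP [hz hs].
have := IH sr hs; rewrite exprD.
have [tz|tz] /= := boolP (t < z).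
  move=> h.
  have -> : (-1) ^+ 1 * (-1) ^+ count (fun z => t < z) s * ((t - z) * \prod_(z <- s) (t - z))
     = (z - t) * ((-1) ^+ count (fun z => t < z) s * \prod_(z <- s) (t - z)) by ring.
  by apply: mulr_gt0 => //; rewrite subr_gt0.
rewrite expr0 mul1r => h; rewrite mulrCA; apply: mulr_gt0 => //.
rewrite subr_gt0; move: tz; rewrite (real_ltNge tr zr) negbK le_eqVlt.
by case/orP => // /eqP ezt; move: hz; rewrite ezt subrr eqxx.
Qed.

Lemma sorted_nth (l : seq algC) (t : algC) k : sorted (fun x y => y <= x) l ->
  (k < count (fun z => (t < z)%R) l)%N -> t < l`_k.
Proof.
elim: l k => [|x l IH] k //= hs.
have hl : sorted (fun x y => y <= x) l by case: l hs {IH} => //= y l /andP [].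
case: k => [|k] /=.
  have hx : all (fun y => y <= x) l.
    have := order_path_min (leT:=fun x y => y <= x) _ hs.
    by apply=> a b c hab hbc; apply: le_trans hbc hab.
  move=> hc; have [//|ntx] := boolP (t < x).
  have /hasP [y yl ty] : has (fun z => t < z) l by rewrite has_count; move: hc; rewrite (negbTE ntx).
  by move: ntx; rewrite (lt_le_trans ty (allP hx y yl)).
by move=> hc; apply: IH => //; move: hc; case: (t < x) => /=; lia.
Qed.

Lemma top3 (l : seq algC) ta tb tc :
  all (fun z => z \is Num.real) l -> sorted (fun x y => y <= x) l ->
  ta \is Num.real -> tb \is Num.real -> tc \is Num.real ->
  ta < tb -> tb < tc ->
  \prod_(z <- l) (tc - z) < 0 -> 0 < \prod_(z <- l) (tb - z) -> \prod_(z <- l) (ta - z) < 0 ->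
  ta + tb + tc < topsum l 3.
Proof.
move=> lr ls ra rb rc hab hbc pc pb pa.
have key : forall t, t \is Num.real -> \prod_(z <- l) (t - z) != 0 ->
    (\prod_(z <- l) (t - z) < 0) = odd (count (fun z => t < z) l).
  move=> t rt hn; have := @sign_prod _ _ lr rt hn.
  rewrite -signr_odd; case: odd => /=.
    by rewrite expr1 mulN1r oppr_gt0 => ->.
  by rewrite expr0 mul1r => h; rewrite (lt_gtF h).
have cc := key tc rc (ltr0_neq0 pc); rewrite pc in cc.
have cb := key tb rb (lt0r_neq0 pb); rewrite (lt_gtF pb) in cb.
have ca := key ta ra (ltr0_neq0 pa); rewrite pa in ca.
have m1 : (count (fun z => (tc < z)%R) l <= count (fun z => (tb < z)%R) l)%N.
  by apply: sub_count => z /= h; apply: lt_trans hbc h.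
have m2 : (count (fun z => (tb < z)%R) l <= count (fun z => (ta < z)%R) l)%N.
  by apply: sub_count => z /= h; apply: lt_trans hab h.
have h0 : (0 < count (fun z => (tc < z)%R) l)%N by lia.
have h1 : (1 < count (fun z => (tb < z)%R) l)%N by lia.
have h2 : (2 < count (fun z => (ta < z)%R) l)%N by lia.
rewrite /topsum !big_ord_recr big_ord0 /= add0r.
have -> : ta + tb + tc = tc + tb + ta by ring.
apply: ltrD; first apply: ltrD.
- exact: sorted_nth h0.
- exact: sorted_nth h1.
- exact: sorted_nth h2.
Qed.
Lemma char_horner n (A : 'M[algC]_n) t : (char_poly A).[t] = \det (t%:M - A).
Proof.
rewrite /char_poly -[_.[t]]/(horner_eval t _) -det_map_mx; congr (\det _).
by apply/matrixP => i j; rewrite !mxE rmorphB rmorphMn /= !horner_evalE hornerX hornerC.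
Qed.

Lemma eig_exists n (A : 'M[algC]_n) : A ^t conjC = A -> exists l, eigen_desc A l.
Proof.
move=> hA; have [r hr] := closed_field_poly_normal (char_poly A).
rewrite (monicP (char_poly_monic A)) scale1r in hr.
have rr : all (fun z => z \is Num.real) r.
  apply/allP => z zr; apply: (@eig_real _ _ _ hA); rewrite hr root_prod_XsubC //.
exists (sort (fun x y => y <= x) r); split.
- have := size_char_poly A; rewrite hr size_prod_XsubC size_sort; by case.
- by apply/allP => x; rewrite mem_sort; apply: (allP rr).
- apply: (@sort_sorted_in _ (fun z : algC => z \is Num.real)) rr => x y xr yr /=.
  by rewrite real_leVge.
- by rewrite hr; apply: perm_big; rewrite perm_sym perm_sort.
Qed.

Definition enc (s : seq nat) : algC := foldl (fun a d => a * 1000%:R + d%:R) 0 s.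
Definition tab (T : seq (seq algC)) (i j : nat) : algC := nth 0 (nth [::] T i) j.
Definition mxof (T : seq (seq algC)) : 'M[algC]_8 := \matrix_(i, j) tab T i j.

Lemma sum8 (F : nat -> algC) :
  \sum_(k < 8) F k = F 0%N + F 1%N + F 2%N + F 3%N + F 4%N + F 5%N + F 6%N + F 7%N.
Proof. by rewrite !big_ord_recr big_ord0 /= add0r. Qed.

Lemma prod8 (F : nat -> algC) :
  \prod_(k < 8) F k = F 0%N * F 1%N * F 2%N * F 3%N * F 4%N * F 5%N * F 6%N * F 7%N.
Proof. by rewrite !big_ord_recr big_ord0 /= mul1r. Qed.

Lemma entryE (t : algC) (i j : 'I_8) : (t%:M - Hmat) i j = t * dd i j - hmf i j.
Proof.
move: Hmat (Hmat_entry) => Hm hHm.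
by rewrite !mxE hHm -mulr_natr -val_eqE ddE.
Qed.

Lemma LUentry (T1 T2 : seq (seq algC)) (i j : 'I_8) :
  (mxof T1 *m mxof T2) i j = 
  tab T1 i 0 * tab T2 0 j + tab T1 i 1 * tab T2 1 j + tab T1 i 2 * tab T2 2 j +
  tab T1 i 3 * tab T2 3 j + tab T1 i 4 * tab T2 4 j + tab T1 i 5 * tab T2 5 j +
  tab T1 i 6 * tab T2 6 j + tab T1 i 7 * tab T2 7 j.
Proof.
rewrite mxE (eq_bigr (fun k : 'I_8 => tab T1 i k * tab T2 k j)); last by move=> k _; rewrite !mxE.
by rewrite (sum8 (fun k => tab T1 i k * tab T2 k j)).
Qed.

Lemma lowtri (T : seq (seq algC)) : (forall i j : 'I_8, (i < j)%N -> tab T i j = 0) ->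
  \det (mxof T) = \prod_(i < 8) tab T i i.
Proof.
move=> h; rewrite det_trig; first by apply: eq_bigr => i _; rewrite mxE.
by apply/is_trig_mxP => i j lij; rewrite mxE h.
Qed.

Lemma uptri (T : seq (seq algC)) : (forall i j : 'I_8, (i < j)%N -> tab T j i = 0) ->
  \det (mxof T) = \prod_(i < 8) tab T i i.
Proof.
move=> h; rewrite -det_tr det_trig; first by apply: eq_bigr => i _; rewrite !mxE.
by apply/is_trig_mxP => i j lij; rewrite !mxE h.
Qed.

Ltac ord8 i := case: i => [[|[|[|[|[|[|[|[|//]]]]]]]] ?].

Lemma enc_pos d s : (0 < d)%N -> 0 < enc (d :: s).
Proof.
rewrite /enc /= => hd.
have : 0 < 0 * 1000%:R + (d%:R : algC) by rewrite mul0r add0r ltr0n.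
elim: s (0 * 1000%:R + d%:R) => [|x s IH] a ha //=.
apply: IH; apply: ltr_wpDr; first by rewrite ler0n.
by apply: mulr_gt0 => //; rewrite ltr0n.
Qed.
Definition ta : algC := 11%:R / 56%:R.
Definition La_tab : seq (seq algC) := [:: [:: 1; 0; 0; 0; 0; 0; 0; 0];
  [:: (- 392%:R / 563%:R); 1; 0; 0; 0; 0; 0; 0];
  [:: (- enc [:: 15; 456] / enc [:: 14; 75]); (- 560%:R / 877%:R); 1; 0; 0; 0; 0; 0];
  [:: 0; 0; (enc [:: 76; 123; 600] / enc [:: 53; 816; 363]); 1; 0; 0; 0; 0];
  [:: (- enc [:: 1; 484] / enc [:: 14; 75]); (- 168%:R / 877%:R); (- enc [:: 55; 260; 168] / enc [:: 53; 816; 363]); (- enc [:: 2; 780; 627; 584] / enc [:: 14; 182; 691; 671]); 1; 0; 0; 0];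
  [:: (enc [:: 1; 484] / enc [:: 2; 815]); (840%:R / 877%:R); (- enc [:: 268; 316; 160] / enc [:: 53; 816; 363]); (- enc [:: 9; 626; 579; 944] / enc [:: 14; 182; 691; 671]); (enc [:: 4; 482; 511; 680; 178] / enc [:: 1; 205; 983; 742; 83]); 1; 0; 0];
  [:: 0; 0; (- enc [:: 101; 995; 100] / enc [:: 53; 816; 363]); (- enc [:: 6; 486; 263; 672] / enc [:: 14; 182; 691; 671]); (- enc [:: 4; 980; 984; 884; 888] / enc [:: 1; 205; 983; 742; 83]); (- enc [:: 116; 243; 792; 357; 728] / enc [:: 5; 782; 563; 67; 583]); 1; 0];
  [:: 0; 0; (- enc [:: 95; 154; 500] / enc [:: 53; 816; 363]); (enc [:: 6; 287; 187; 400] / enc [:: 14; 182; 691; 671]); (enc [:: 2; 121; 461; 875; 680] / enc [:: 1; 205; 983; 742; 83]); (enc [:: 6; 103; 745; 682; 120] / enc [:: 5; 782; 563; 67; 583]); (- enc [:: 271; 911; 446; 54; 10] / enc [:: 10; 834; 331; 674; 455; 169]); 1]].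
Definition Ua_tab : seq (seq algC) := [:: [:: (enc [:: 14; 75] / enc [:: 204; 792]); (- 175%:R / enc [:: 3; 657]); (- 4%:R / 53%:R); 0; (- 1%:R / 138%:R); (5%:R / 138%:R); 0; 0];
  [:: 0; (enc [:: 9; 647] / enc [:: 94; 584]); (- 110%:R / enc [:: 1; 689]); 0; (- 11%:R / 563%:R); (55%:R / 563%:R); 0; 0];
  [:: 0; 0; (- enc [:: 53; 816; 363] / enc [:: 2; 626; 264; 200]); (- 2%:R / 69%:R); (enc [:: 100; 109] / enc [:: 4; 757; 725]); (448%:R / enc [:: 4; 385]); (enc [:: 1; 163] / enc [:: 29; 946]); (5%:R / 138%:R)];
  [:: 0; 0; 0; (enc [:: 14; 182; 691; 671] / enc [:: 93; 425; 206; 168]); (- enc [:: 1; 601; 744] / enc [:: 53; 816; 363]); (- enc [:: 1; 203; 322; 493] / enc [:: 11; 678; 150; 771]); (- enc [:: 3; 736; 327] / enc [:: 53; 816; 363]); (enc [:: 785; 898; 425] / enc [:: 11; 678; 150; 771])];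
  [:: 0; 0; 0; 0; (enc [:: 1; 205; 983; 742; 83] / enc [:: 42; 94; 228; 879; 528]); (enc [:: 320; 179; 405; 727] / enc [:: 3; 6; 730; 634; 252]); (- enc [:: 622; 623; 110; 611] / enc [:: 5; 261; 778; 609; 941]); (enc [:: 714; 778; 260] / enc [:: 14; 182; 691; 671])];
  [:: 0; 0; 0; 0; 0; (- enc [:: 5; 782; 563; 67; 583] / enc [:: 202; 605; 268; 669; 944]); (enc [:: 2; 75; 782; 6; 388] / enc [:: 3; 617; 951; 226; 249]); (- enc [:: 254; 322; 736; 755] / enc [:: 8; 441; 886; 194; 581])];
  [:: 0; 0; 0; 0; 0; 0; (enc [:: 10; 834; 331; 674; 455; 169] / enc [:: 971; 470; 595; 353; 944]); (- enc [:: 6; 474; 82; 48; 905] / enc [:: 23; 130; 252; 270; 332])];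
  [:: 0; 0; 0; 0; 0; 0; 0; (- enc [:: 1; 103; 862; 172; 546; 573] / enc [:: 1; 820; 167; 721; 308; 468; 392])]].
Definition deta : algC := (- enc [:: 12; 142; 483; 898; 12; 303] / enc [:: 100; 684; 482; 745; 756; 35; 468; 754; 944]).

Lemma Ma : ta%:M - Hmat = mxof La_tab *m mxof Ua_tab.
Proof.
apply/matrixP => i j; rewrite entryE LUentry.
ord8 i; ord8 j; cbv [tab nth hmf dd eqn bA bB bC iAB iAC iBC wAB wAC wBC enc foldl La_tab Ua_tab nat_of_ord ta]; field => //.
Qed.

Lemma detaE : \det (ta%:M - Hmat) = deta.
Proof.
have hl : forall i j : 'I_8, (i < j)%N -> tab La_tab i j = 0.
  by move=> i j; ord8 i; ord8 j.
have hu : forall i j : 'I_8, (i < j)%N -> tab Ua_tab j i = 0.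
  by move=> i j; ord8 i; ord8 j.
rewrite Ma det_mulmx (lowtri _ hl) (uptri _ hu).
rewrite (prod8 (fun k => tab La_tab k k)) (prod8 (fun k => tab Ua_tab k k)).
  cbv [tab nth La_tab Ua_tab deta enc foldl]; field => //.
Qed.
Definition tb : algC := 17%:R / 54%:R.
Definition Lb_tab : seq (seq algC) := [:: [:: 1; 0; 0; 0; 0; 0; 0; 0];
  [:: (- enc [:: 3; 150] / enc [:: 12; 317]); 1; 0; 0; 0; 0; 0; 0];
  [:: (- enc [:: 4; 968] / enc [:: 12; 317]); (- enc [:: 5; 301] / enc [:: 40; 150]); 1; 0; 0; 0; 0; 0];
  [:: 0; 0; (- enc [:: 156; 825; 900] / enc [:: 1; 15; 590; 629]); 1; 0; 0; 0; 0];
  [:: (- 477%:R / enc [:: 12; 317]); (- enc [:: 1; 359] / enc [:: 20; 75]); (enc [:: 196; 907; 922] / enc [:: 1; 15; 590; 629]); (enc [:: 66; 880; 203; 768] / enc [:: 2; 674; 301; 78; 833]); 1; 0; 0; 0];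
  [:: (enc [:: 2; 385] / enc [:: 12; 317]); (enc [:: 1; 359] / enc [:: 4; 15]); (enc [:: 137; 452; 140] / enc [:: 1; 15; 590; 629]); (enc [:: 540; 262; 963; 854] / enc [:: 2; 674; 301; 78; 833]); (enc [:: 1; 883; 445; 707; 817] / enc [:: 1; 946; 958; 199; 709; 135]); 1; 0; 0];
  [:: 0; 0; (enc [:: 210; 125; 25] / enc [:: 1; 15; 590; 629]); (- enc [:: 101; 104; 360; 938] / enc [:: 2; 674; 301; 78; 833]); (- enc [:: 2; 325; 446; 69; 501; 736] / enc [:: 1; 946; 958; 199; 709; 135]); (- enc [:: 1; 679; 184; 245; 602; 296] / enc [:: 11; 731; 997; 690; 227; 237]); 1; 0];
  [:: 0; 0; (enc [:: 196; 32; 375] / enc [:: 1; 15; 590; 629]); (enc [:: 1; 477; 370; 674; 350] / enc [:: 2; 674; 301; 78; 833]); (- enc [:: 31; 11; 610; 798; 332] / enc [:: 389; 391; 639; 941; 827]); (- enc [:: 10; 418; 682; 691; 550; 160] / enc [:: 11; 731; 997; 690; 227; 237]); (enc [:: 817; 576; 851; 509; 415] / enc [:: 597; 424; 570; 920; 811]); 1]].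
Definition Ub_tab : seq (seq algC) := [:: [:: (enc [:: 12; 317] / enc [:: 65; 826]); (- 175%:R / enc [:: 3; 657]); (- 4%:R / 53%:R); 0; (- 1%:R / 138%:R); (5%:R / 138%:R); 0; 0];
  [:: 0; (enc [:: 80; 300] / enc [:: 332; 559]); (- enc [:: 1; 178] / enc [:: 36; 951]); 0; (- 604%:R / enc [:: 36; 951]); (enc [:: 3; 20] / enc [:: 36; 951]); 0; 0];
  [:: 0; 0; (enc [:: 1; 15; 590; 629] / enc [:: 5; 410; 493; 550]); (- 2%:R / 69%:R); (enc [:: 158; 541] / enc [:: 4; 356; 275]); (102%:R / enc [:: 4; 15]); (enc [:: 1; 163] / enc [:: 29; 946]); (5%:R / 138%:R)];
  [:: 0; 0; 0; (enc [:: 2; 674; 301; 78; 833] / enc [:: 11; 900; 690; 990; 622]); (enc [:: 5; 707; 476] / enc [:: 1; 15; 590; 629]); (enc [:: 10; 4; 869; 701] / enc [:: 220; 383; 166; 493]); (- enc [:: 25; 884; 373] / enc [:: 3; 46; 771; 887]); (enc [:: 82; 76; 148; 575] / enc [:: 661; 149; 499; 479])];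
  [:: 0; 0; 0; 0; (enc [:: 1; 946; 958; 199; 709; 135] / enc [:: 15; 307; 699; 375; 240; 92]); (enc [:: 209; 271; 745; 313] / enc [:: 1; 700; 855; 486; 137; 788]); (- enc [:: 21; 531; 908; 50; 942] / enc [:: 141; 737; 957; 178; 149]); (- enc [:: 27; 89; 107; 965] / enc [:: 2; 674; 301; 78; 833])];
  [:: 0; 0; 0; 0; 0; (enc [:: 11; 731; 997; 690; 227; 237] / enc [:: 105; 135; 742; 784; 293; 290]); (- enc [:: 93; 288; 13; 644; 572] / enc [:: 5; 840; 874; 599; 127; 405]); (- enc [:: 38; 587; 713; 672; 408] / enc [:: 389; 391; 639; 941; 827])];
  [:: 0; 0; 0; 0; 0; 0; (- enc [:: 10; 156; 217; 705; 653; 787] / enc [:: 1; 267; 55; 750; 544; 541; 596]); (- enc [:: 1; 544; 311; 830; 628; 895] / enc [:: 140; 783; 972; 282; 726; 844])];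
  [:: 0; 0; 0; 0; 0; 0; 0; (- enc [:: 31; 333; 752; 808; 844] / enc [:: 16; 130; 463; 414; 861; 897])]].
Definition detb : algC := (enc [:: 133; 168; 449; 437; 587] / enc [:: 316; 196; 439; 186; 727; 510; 7; 184]).

Lemma Mb : tb%:M - Hmat = mxof Lb_tab *m mxof Ub_tab.
Proof.
apply/matrixP => i j; rewrite entryE LUentry.
ord8 i; ord8 j; cbv [tab nth hmf dd eqn bA bB bC iAB iAC iBC wAB wAC wBC enc foldl Lb_tab Ub_tab nat_of_ord tb]; field => //.
Qed.

Lemma detbE : \det (tb%:M - Hmat) = detb.
Proof.
have hl : forall i j : 'I_8, (i < j)%N -> tab Lb_tab i j = 0.
  by move=> i j; ord8 i; ord8 j.
have hu : forall i j : 'I_8, (i < j)%N -> tab Ub_tab j i = 0.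
  by move=> i j; ord8 i; ord8 j.
rewrite Mb det_mulmx (lowtri _ hl) (uptri _ hu).
rewrite (prod8 (fun k => tab Lb_tab k k)) (prod8 (fun k => tab Ub_tab k k)).
  cbv [tab nth Lb_tab Ub_tab detb enc foldl]; field => //.
Qed.
Definition tc : algC := 10%:R / 31%:R.
Definition Lc_tab : seq (seq algC) := [:: [:: 1; 0; 0; 0; 0; 0; 0; 0];
  [:: (- enc [:: 5; 425] / enc [:: 22; 93]); 1; 0; 0; 0; 0; 0; 0];
  [:: (- enc [:: 8; 556] / enc [:: 22; 93]); (- enc [:: 127; 844] / enc [:: 1; 26; 151]); 1; 0; 0; 0; 0; 0];
  [:: 0; 0; (- enc [:: 63; 621; 362] / enc [:: 432; 445; 607]); 1; 0; 0; 0; 0];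
  [:: (- enc [:: 1; 643] / enc [:: 44; 186]); (- enc [:: 66; 867] / enc [:: 1; 26; 151]); (enc [:: 80; 424; 813] / enc [:: 432; 445; 607]); (enc [:: 252; 930; 209] / enc [:: 10; 918; 154; 656]); 1; 0; 0; 0];
  [:: (enc [:: 8; 215] / enc [:: 44; 186]); (enc [:: 334; 335] / enc [:: 1; 26; 151]); (enc [:: 53; 47; 200] / enc [:: 432; 445; 607]); (enc [:: 4; 225; 669; 663] / enc [:: 21; 836; 309; 312]); (enc [:: 45; 91; 515; 155] / enc [:: 16; 985; 672; 71; 994]); 1; 0; 0];
  [:: 0; 0; (enc [:: 170; 487; 659] / enc [:: 864; 891; 214]); (- enc [:: 205; 959; 691] / enc [:: 5; 459; 77; 328]); (- enc [:: 9; 519; 152; 591; 318] / enc [:: 8; 492; 836; 35; 997]); (- enc [:: 48; 152; 149; 39; 951] / enc [:: 384; 554; 224; 143; 818]); 1; 0];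
  [:: 0; 0; (enc [:: 159; 53; 405] / enc [:: 864; 891; 214]); (enc [:: 5; 812; 358; 995] / enc [:: 10; 918; 154; 656]); (- enc [:: 603; 238; 548; 465] / enc [:: 8; 492; 836; 35; 997]); (- enc [:: 308; 84; 404; 841; 865] / enc [:: 384; 554; 224; 143; 818]); (- enc [:: 209; 775; 873; 999; 555] / enc [:: 343; 488; 332; 795; 407]); 1]].
Definition Uc_tab : seq (seq algC) := [:: [:: (enc [:: 22; 93] / enc [:: 113; 367]); (- 175%:R / enc [:: 3; 657]); (- 4%:R / 53%:R); 0; (- 1%:R / 138%:R); (5%:R / 138%:R); 0; 0];
  [:: 0; (enc [:: 1; 26; 151] / enc [:: 4; 109; 298]); (- enc [:: 2; 62] / enc [:: 66; 279]); 0; (- 719%:R / enc [:: 44; 186]); (enc [:: 3; 595] / enc [:: 44; 186]); 0; 0];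
  [:: 0; 0; (enc [:: 432; 445; 607] / enc [:: 2; 194; 936; 989]); (- 2%:R / 69%:R); (enc [:: 166; 511] / enc [:: 4; 544; 383]); (enc [:: 24; 800] / enc [:: 1; 26; 151]); (enc [:: 1; 163] / enc [:: 29; 946]); (5%:R / 138%:R)];
  [:: 0; 0; 0; (enc [:: 21; 836; 309; 312] / enc [:: 93; 840; 696; 719]); (enc [:: 2; 331; 154] / enc [:: 432; 445; 607]); (enc [:: 4; 225; 669; 663] / enc [:: 93; 840; 696; 719]); (- enc [:: 3; 796; 492] / enc [:: 432; 445; 607]); (enc [:: 11; 624; 717; 990] / enc [:: 93; 840; 696; 719])];
  [:: 0; 0; 0; 0; (enc [:: 8; 492; 836; 35; 997] / enc [:: 62; 784; 848; 349; 328]); (enc [:: 1; 454; 565; 5] / enc [:: 4; 50; 635; 377; 376]); (- enc [:: 4; 759; 576; 295; 659] / enc [:: 31; 392; 424; 174; 664]); (- enc [:: 52; 450; 965] / enc [:: 5; 459; 77; 328])];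
  [:: 0; 0; 0; 0; 0; (enc [:: 192; 277; 112; 71; 909] / enc [:: 1; 579; 667; 502; 695; 442]); (- enc [:: 1; 553; 295; 130; 321] / enc [:: 101; 914; 32; 431; 964]); (- enc [:: 102; 694; 801; 613; 955] / enc [:: 1; 53; 111; 668; 463; 628])];
  [:: 0; 0; 0; 0; 0; 0; (enc [:: 1; 717; 441; 663; 977; 35] / enc [:: 143; 54; 171; 381; 500; 296]); (- enc [:: 11; 278; 272; 795; 675] / enc [:: 1; 538; 216; 896; 575; 272])];
  [:: 0; 0; 0; 0; 0; 0; 0; (- enc [:: 22; 313; 658; 292; 790] / enc [:: 31; 944; 414; 949; 972; 851])]].
Definition detc : algC := (- enc [:: 55; 784; 145; 731; 975] / enc [:: 181; 85; 869; 13; 830; 933; 110; 84]).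

Lemma Mc : tc%:M - Hmat = mxof Lc_tab *m mxof Uc_tab.
Proof.
apply/matrixP => i j; rewrite entryE LUentry.
ord8 i; ord8 j; cbv [tab nth hmf dd eqn bA bB bC iAB iAC iBC wAB wAC wBC enc foldl Lc_tab Uc_tab nat_of_ord tc]; field => //.
Qed.

Lemma detcE : \det (tc%:M - Hmat) = detc.
Proof.
have hl : forall i j : 'I_8, (i < j)%N -> tab Lc_tab i j = 0.
  by move=> i j; ord8 i; ord8 j.
have hu : forall i j : 'I_8, (i < j)%N -> tab Uc_tab j i = 0.
  by move=> i j; ord8 i; ord8 j.
rewrite Mc det_mulmx (lowtri _ hl) (uptri _ hu).
rewrite (prod8 (fun k => tab Lc_tab k k)) (prod8 (fun k => tab Uc_tab k k)).
  cbv [tab nth Lc_tab Uc_tab detc enc foldl]; field => //.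
Qed.

Lemma ddC a b : dd a b = dd b a.
Proof. by rewrite /dd; have -> : eqn a b = (a == b) by []; have -> : eqn b a = (b == a) by []; rewrite eq_sym. Qed.

Lemma dd_real a b : dd a b \is Num.real.
Proof. by rewrite /dd; case: eqn; rewrite ?rpred1 ?rpred0. Qed.

Lemma wAB_real k : wAB k \is Num.real.
Proof. by apply: w_real; rewrite /= !(rpredN, rpred_nat, rpred0, rpred1). Qed.
Lemma wAC_real k : wAC k \is Num.real.
Proof. by apply: w_real; rewrite /= !(rpredN, rpred_nat, rpred0, rpred1). Qed.
Lemma wBC_real k : wBC k \is Num.real.
Proof. by apply: w_real; rewrite /= !(rpredN, rpred_nat, rpred0, rpred1). Qed.

Lemma hmf_real i j : hmf i j \is Num.real.
Proof.
have r : forall n : nat, (n%:R : algC)^-1 \is Num.real by move=> n; rewrite rpredV rpred_nat.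
rewrite /hmf rpredM ?r // !rpredD // rpredM ?dd_real // rpredM ?r // rpredM ?wAB_real ?wAC_real ?wBC_real //.
Qed.

Lemma Hmat_herm : Hmat ^t conjC = Hmat.
Proof.
move: Hmat (Hmat_entry) => Hm hHm.
apply/matrixP => i j; rewrite !mxE !hHm (conj_Creal (hmf_real _ _)).
rewrite /hmf [dd (bC j) _]ddC [dd (bB j) _]ddC [dd (bA j) _]ddC; ring.
Qed.

Lemma num_real (n m : nat) : (n%:R / m%:R : algC) \is Num.real.
Proof. by rewrite rpredM ?rpredV ?rpred_nat. Qed.

Lemma prod_eval (l : seq algC) t :
  (\prod_(z <- l) ('X - z%:P)).[t] = \prod_(z <- l) (t - z).
Proof. by rewrite horner_prod; apply: eq_bigr => z _; rewrite hornerXsubC. Qed.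

Lemma part1 : exists l, eigen_desc Hmat l /\ topsum l 3 > 5 / 6.
Proof.
have [l hl] := @eig_exists _ _ Hmat_herm.
exists l; split => //.
case: hl => _ lr ls hp.
have ev : forall t, \prod_(z <- l) (t - z) = \det (t%:M - Hmat).
  by move=> t; rewrite -char_horner hp prod_eval.
have h := @top3 l ta tb tc lr ls (num_real _ _) (num_real _ _) (num_real _ _).
apply: lt_trans (h _ _ _ _ _).
- rewrite /ta /tb /tc -subr_gt0.
  have -> : (11%:R / 56%:R + 17%:R / 54%:R + 10%:R / 31%:R - 5 / 6 : algC) = 23%:R / (56%:R * 837%:R) by field.
  by rewrite divr_gt0 ?mulr_gt0 ?ltr0n.
- rewrite /ta /tb -subr_gt0.
  have -> : (17%:R / 54%:R - 11%:R / 56%:R : algC) = 179%:R / 1512%:R by field.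
  by rewrite divr_gt0 ?mulr_gt0 ?ltr0n.
- rewrite /tb /tc -subr_gt0.
  have -> : (10%:R / 31%:R - 17%:R / 54%:R : algC) = 13%:R / 1674%:R by field.
  by rewrite divr_gt0 ?mulr_gt0 ?ltr0n.
- by rewrite ev detcE /detc mulNr oppr_lt0 divr_gt0 ?enc_pos.
- by rewrite ev detbE /detb divr_gt0 ?enc_pos.
- by rewrite ev detaE /deta mulNr oppr_lt0 divr_gt0 ?enc_pos.
Qed.

Lemma projK (x y : 'I_4) : proj (ket2 0 0) x y = dd x 0 * dd y 0.
Proof.
by rewrite /proj mxE big_ord1 !mxE rmorph_nat /= -!val_eqE /= !inordK // !andbT -!ddE.
Qed.

Definition htf (i j : nat) : algC :=
  6^-1 * (dd (iAB i) 0 * dd (iAB j) 0 * dd (bC i) (bC j)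
        + dd (iAC i) 0 * dd (iAC j) 0 * dd (bB i) (bB j)
        + dd (iBC i) 0 * dd (iBC j) 0 * dd (bA i) (bA j)).

Lemma Htarget_entry (i j : 'I_8) : Htarget i j = htf i j.
Proof.
have [[eAi eBi eCi] [fABi fACi fBCi]] := (bitsE i, idxE i).
have [[eAj eBj eCj] [fABj fACj fBCj]] := (bitsE j, idxE j).
have [[l1 l2 l3 l4 l5] l6] := idx_lt i.
have [[m1 m2 m3 m4 m5] m6] := idx_lt j.
rewrite /Htarget; move: (proj (ket2 0 0)) (projK) => P1 hP1.
rewrite !mxE !hP1 fABi fACi fBCi fABj fACj fBCj eAi eBi eCi eAj eBj eCj.
rewrite -!val_eqE /= !inordK // !ddE /htf; ring.
Qed.

Lemma Ht_trig : is_trig_mx Htarget.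
Proof.
apply/is_trig_mxP => i j; rewrite Htarget_entry.
ord8 i; ord8 j; move=> //= _; cbv [htf dd eqn bA bB bC iAB iAC iBC nat_of_ord]; ring.
Qed.

Lemma Ht_diag (i : 'I_8) : Htarget i i = nth 0 [:: 2^-1; 6^-1; 6^-1; 0; 6^-1; 0; 0; 0] i.
Proof.
rewrite Htarget_entry; ord8 i; cbv [htf dd eqn bA bB bC iAB iAC iBC nat_of_ord nth]; field => //.
Qed.

Lemma prod8g (R : comNzRingType) (F : nat -> R) :
  \prod_(k < 8) F k = F 0%N * F 1%N * F 2%N * F 3%N * F 4%N * F 5%N * F 6%N * F 7%N.
Proof. by rewrite !big_ord_recr big_ord0 /= mul1r. Qed.

Lemma inv_le (n m : nat) : (0 < n)%N -> (n <= m)%N -> (m%:R : algC)^-1 <= n%:R^-1.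
Proof.
move=> hn hm; rewrite lef_pV2 ?ler_nat // posrE ltr0n //; exact: leq_trans hm.
Qed.

Lemma part2 : exists l, eigen_desc Htarget l /\ topsum l 3 = 5 / 6.
Proof.
exists [:: 2^-1; 6^-1; 6^-1; 6^-1; 0; 0; 0; 0]; split; last first.
  by rewrite /topsum !big_ord_recr big_ord0 /=; field.
have r : forall n : nat, (n%:R : algC)^-1 \is Num.real by move=> n; rewrite rpredV rpred_nat.
have p : forall n : nat, 0 <= (n%:R : algC)^-1 by move=> n; rewrite invr_ge0 ler0n.
split => //.
- by rewrite /= !r !real0.
- by rewrite /= !p !lexx inv_le.
rewrite char_poly_trig ?Ht_trig //.
rewrite (eq_bigr (fun i : 'I_8 => 'X - (nth 0 [:: 2^-1; 6^-1; 6^-1; 0; 6^-1; 0; 0; 0] i)%:P)); last first.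
  by move=> i _; rewrite Ht_diag.
rewrite (@prod8g _ (fun k => 'X - (nth 0 [:: 2^-1; 6^-1; 6^-1; 0; 6^-1; 0; 0; 0] k)%:P)).
rewrite !big_cons big_nil; cbv [nth]; ring.
Qed.

Lemma part3 : ~ majorized Hmat Htarget.
Proof.
move=> hm; have [l1 [e1 h1]] := part1; have [l2 [e2 h2]] := part2.
have [/(_ 3%N isT) h _] := hm l1 l2 e1 e2.
by rewrite h2 (lt_geF h1) in h.
Qed.

Lemma psiAB_E (k : 'I_4) : psiAB k 0 = (sqrtC 217)^-1 * wAB k.
Proof.
rewrite /psiAB mxE; congr (_ * _); rewrite !mxE.
by case: k => [[|[|[|[|//]]]] Hk]; rewrite -!val_eqE /= !inordK //= /wAB /=; ring.
Qed.
Lemma psiAC_E (k : 'I_4) : psiAC k 0 = (sqrtC 46)^-1 * wAC k.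
Proof.
rewrite /psiAC mxE; congr (_ * _); rewrite !mxE.
by case: k => [[|[|[|[|//]]]] Hk]; rewrite -!val_eqE /= !inordK //= /wAC /=; ring.
Qed.
Lemma psiBC_E (k : 'I_4) : psiBC k 0 = (sqrtC 53)^-1 * wBC k.
Proof.
rewrite /psiBC mxE; congr (_ * _); rewrite !mxE.
by case: k => [[|[|[|[|//]]]] Hk]; rewrite -!val_eqE /= !inordK //= /wBC /=; ring.
Qed.

Lemma unit_gen (v : 'cV[algC]_4) (w : nat -> algC) (n : nat) :
  (forall k : 'I_4, v k 0 = (sqrtC n%:R)^-1 * w k) ->
  (forall k, w k \is Num.real) ->
  w 0%N * w 0%N + w 1%N * w 1%N + w 2%N * w 2%N + w 3%N * w 3%N = n%:R -> (n > 0)%N ->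
  unitvec v.
Proof.
move=> hv hr hs hn; rewrite /unitvec; apply/matrixP => i j; rewrite (ord1 i) (ord1 j) !mxE.
rewrite (eq_bigr (fun k : 'I_4 => (sqrtC n%:R)^-1 * ((sqrtC n%:R)^-1)^* * (w k * w k))); last first.
  by move=> k _; rewrite !mxE hv rmorphM /= (conj_Creal (hr _)); ring.
rewrite -big_distrr sqrt_inv2 /= !big_ord_recr big_ord0 /= add0r hs mulVf //.
by rewrite pnatr_eq0 -lt0n.
Qed.

Lemma unitAB : unitvec psiAB.
Proof. by apply: (@unit_gen _ _ _ psiAB_E wAB_real) => //; rewrite /wAB /=; ring. Qed.
Lemma unitAC : unitvec psiAC.
Proof. by apply: (@unit_gen _ _ _ psiAC_E wAC_real) => //; rewrite /wAC /=; ring. Qed.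
Lemma unitBC : unitvec psiBC.
Proof. by apply: (@unit_gen _ _ _ psiBC_E wBC_real) => //; rewrite /wBC /=; ring. Qed.

Lemma embAB_Q M : embAB M Qhalf = 2^-1 *: embAB M 1%:M.
Proof. by apply/matrixP => i j; rewrite !mxE; ring. Qed.
Lemma embAC_Q M : embAC M Qhalf = 2^-1 *: embAC M 1%:M.
Proof. by apply/matrixP => i j; rewrite !mxE; ring. Qed.
Lemma embBC_Q M : embBC M Qhalf = 2^-1 *: embBC M 1%:M.
Proof. by apply/matrixP => i j; rewrite !mxE; ring. Qed.

Lemma mu2 : mu * 2^-1 = 6^-1.
Proof. by rewrite /mu; field. Qed.

Lemma Hgen_eq : Hgen psiAB psiAC psiBC = Hmat.
Proof.
by rewrite /Hgen /Hmat embAB_Q embAC_Q embBC_Q !scalerA mu2 !scalerDr.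
Qed.

Definition h2 (n : nat) : nat := match n with 0|1 => 0 | _ => 1 end.
Definition l2 (n : nat) : nat := match n with 0|2 => 0 | _ => 1 end.
Lemma d2E (i : 'I_4) : (i %/ 2 = h2 i)%N /\ (i %% 2 = l2 i)%N.
Proof. by case: i => [[|[|[|[|//]]]] Hi]. Qed.

Lemma ktens00 : ktens ket0 ket0 = ket2 0 0.
Proof.
apply/matrixP => i j; rewrite (ord1 j) !mxE; have [-> ->] := d2E i.
by case: i => [[|[|[|[|//]]]] Hi]; rewrite -!val_eqE /= !inordK //=; ring.
Qed.

Lemma Hgen_target_eq : Hgen_target = Htarget.
Proof.
by rewrite /Hgen_target /= ktens00 /Htarget embAB_Q embAC_Q embBC_Q !scalerA mu2 !scalerDr.
Qed.

Theorem mainTheorem1 :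
  (exists l, eigen_desc Hmat l /\ topsum l 3 > 5 / 6)
  /\ (exists l, eigen_desc Htarget l /\ topsum l 3 = 5 / 6)
  /\ ~ majorized Hmat Htarget
  /\ (exists pAB pAC pBC : 'cV[algC]_4,
        [/\ unitvec pAB, unitvec pAC, unitvec pBC
          & ~ majorized (Hgen pAB pAC pBC) Hgen_target]).
Proof.
split; first exact: part1.
split; first exact: part2.
split; first exact: part3.
exists psiAB, psiAC, psiBC; split.
- exact: unitAB.
- exact: unitAC.
- exact: unitBC.
- by rewrite Hgen_eq Hgen_target_eq; exact: part3.
Qed.
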